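(* Let $(\lambda_k),(x_k),(y_k)$ be generated by the acceleration framework (context) for a convex differentiable $g$ with minimizer $x^*$, $g^*=g(x^* )$, parameters $\sigma\in(0,1)$, $\delta\ge0$. Then for all $k\ge1$, \[ A_k[g(y_k)-g^*]+\frac12\|x_k-x^*\|^2+\sum_{i\in[k]}\frac{(1-\sigma)A_i}{2\lambda_i}\|y_i-\tilde x_{i-1}\|^2\le\frac12\|x^*\|^2+\delta_k, \] where $\delta_k=\delta\sum_{i\in[k]}a_i\|x_i-x^*\|+\frac{\delta^2}{2(1-\sigma)}\sum_{i\in[k]}a_i^2$.
   Context: Acceleration framework: let $g:\mathbb{R}^d\to\mathbb{R}$ be convex and differentiable, $\sigma\in(0,1)$, $\delta\ge0$, $K\ge1$. Sequences $(\lambda_k)_{k=1}^K\subset(0,\infty)$ and $(x_k)_{k=0}^K,(y_k)_{k=0}^K\subset\mathbb{R}^d$ are generated by the framework if $x_0=y_0=0$, $A_0=0$, and for each $k=0,\dots,K-1$, with $a_{k+1}=\frac12\big[\lambda_{k+1}+\sqrt{\lambda_{k+1}^2+4\lambda_{k+1}A_k}\big]$, $A_{k+1}=A_k+a_{k+1}$, $\tilde x_k=\frac{A_k}{A_{k+1}}y_k+\frac{a_{k+1}}{A_{k+1}}x_k$, one has $\|\lambda_{k+1}\nabla g(y_{k+1})+y_{k+1}-\tilde x_k\|\le\sigma\|y_{k+1}-\tilde x_k\|+\lambda_{k+1}\delta$ and $\|x_{k+1}-(x_k-a_{k+1}\nabla g(y_{k+1}))\|\le a_{k+1}\delta$. (Note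 $\lambda_{k+1}A_{k+1}=a_{k+1}^2$.) *)

(* Defs.v *)
From mathcomp Require Import ssreflect ssrfun ssrbool eqtype ssrnat seq fintype bigop.
From Stdlib Require Import Reals.
Open Scope R_scope.

Definition vec (d : nat) := 'I_d -> R.

Definition vadd {d} (u v : vec d) : vec d := fun i => u i + v i.
Definition vsub {d} (u v : vec d) : vec d := fun i => u i - v i.
Definition vscale {d} (c : R) (u : vec d) : vec d := fun i => c * u i.
Definition vzero {d} : vec d := fun _ => 0.

Definition dot {d} (u v : vec d) : R := \big[Rplus/0]_(i < d) (u i * v i).
Definition vnorm {d} (u : vec d) : R := sqrt (dot u u).

Definition convex_fun {d} (g : vec d -> R) : Prop :=
  forall (x y : vec d) (t : R), 0 <= t <= 1 ->
    g (vadd (vscale t x) (vscale (1 - t) y)) <= t * g x + (1 - t) * g y.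

Definition has_gradient {d} (g : vec d -> R) (grad : vec d -> vec d) : Prop :=
  forall (x : vec d) (eps : R), 0 < eps -> exists del : R, 0 < del /\
    forall h : vec d, vnorm h < del ->
      Rabs (g (vadd x h) - g x - dot (grad x) h) <= eps * vnorm h.

Definition next_a (lam Ak : R) : R := (lam + sqrt (lam ^ 2 + 4 * lam * Ak)) / 2.

Fixpoint Aseq (lam : nat -> R) (k : nat) : R :=
  match k with
  | O => 0
  | S k' => Aseq lam k' + next_a (lam (S k')) (Aseq lam k')
  end.

(* a_k for k >= 1 *)
Definition aseq (lam : nat -> R) (k : nat) : R := next_a (lam k) (Aseq lam k.-1).

Definition xtilde {d} (lam : nat -> R) (x y : nat -> vec d) (k : nat) : vec d :=
  vadd (vscale (Aseq lam k / Aseq lam (S k)) (y k))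
       (vscale (aseq lam (S k) / Aseq lam (S k)) (x k)).

Definition generated_by_framework {d} (grad : vec d -> vec d)
  (sigma delta : R) (K : nat) (lam : nat -> R) (x y : nat -> vec d) : Prop :=
  (forall k, (1 <= k <= K)%nat -> 0 < lam k) /\
  x O = vzero /\ y O = vzero /\
  forall k, (k < K)%nat ->
    vnorm (vsub (vadd (vscale (lam (S k)) (grad (y (S k)))) (y (S k)))
                (xtilde lam x y k))
      <= sigma * vnorm (vsub (y (S k)) (xtilde lam x y k)) + lam (S k) * delta /\
    vnorm (vsub (x (S k)) (vsub (x k) (vscale (aseq lam (S k)) (grad (y (S k))))))
      <= aseq lam (S k) * delta.

(* sum_{i in [k]} f i = f 1 + ... + f k *)
Definition sum1 (f : nat -> R) (k : nat) : R := \big[Rplus/0]_(1 <= i < k.+1) f i.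

(* Main.v *)
From HB Require Import structures.
Require Import Defs.
From mathcomp Require Import ssreflect ssrfun ssrbool eqtype ssrnat seq fintype bigop.
From Stdlib Require Import Reals Lra Psatz FunctionalExtensionality.
Open Scope R_scope.

HB.instance Definition _ := Monoid.isComLaw.Build R 0 Rplus (fun a b c => esym (Rplus_assoc a b c)) Rplus_comm Rplus_0_l.

Section V.
Context {d : nat}.
Implicit Types u v w : vec d.

Lemma dot_addl u v w : dot (vadd u v) w = dot u w + dot v w.
Proof. rewrite /dot -big_split /=; apply: eq_bigr => i _; rewrite /vadd; ring. Qed.
Lemma dot_subl u v w : dot (vsub u v) w = dot u w - dot v w.
Proof.
rewrite /dot; apply: (big_rec3 (fun a b c => a = b - c)); first ring.
move=> i a b c _ ->; rewrite /vsub; ring. Qed.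
Lemma dot_scalel c u w : dot (vscale c u) w = c * dot u w.
Proof.
rewrite /dot; apply: (big_rec2 (fun a b => a = c * b)); first ring.
move=> i a b _ ->; rewrite /vscale; ring. Qed.
Lemma dot_comm u w : dot u w = dot w u.
Proof. rewrite /dot; apply: eq_bigr => i _; ring. Qed.
Lemma dot_addr u v w : dot w (vadd u v) = dot w u + dot w v.
Proof. by rewrite !(dot_comm w) dot_addl. Qed.
Lemma dot_subr u v w : dot w (vsub u v) = dot w u - dot w v.
Proof. by rewrite !(dot_comm w) dot_subl. Qed.
Lemma dot_scaler c u w : dot w (vscale c u) = c * dot w u.
Proof. by rewrite !(dot_comm w) dot_scalel. Qed.
Lemma dot_ge0 u : 0 <= dot u u.
Proof. rewrite /dot; apply: big_ind => //; [lra| move=> a b; lra | move=> i _; nra]. Qed.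
Lemma vnorm_ge0 u : 0 <= vnorm u.
Proof. apply: sqrt_pos. Qed.
Lemma vnorm_sq u : vnorm u ^ 2 = dot u u.
Proof. rewrite /vnorm /= Rmult_1_r sqrt_sqrt //; apply: dot_ge0. Qed.
Lemma vnorm_scale c u : 0 <= c -> vnorm (vscale c u) = c * vnorm u.
Proof.
move=> hc; rewrite /vnorm dot_scalel dot_scaler -Rmult_assoc sqrt_mult.
- by rewrite sqrt_square.
- nra.
- apply: dot_ge0.
Qed.

Lemma cs_c u w c : 0 < c -> 2 * c * dot u w <= c ^ 2 * dot u u + dot w w.
Proof.
move=> hc; have := dot_ge0 (vsub (vscale c u) w).
rewrite !dot_subl !dot_subr !dot_scalel !dot_scaler (dot_comm w u); nra.
Qed.

Lemma cs u w : dot u w <= vnorm u * vnorm w.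
Proof.
have hu := vnorm_sq u; have hw := vnorm_sq w.
have hu0 := vnorm_ge0 u; have hw0 := vnorm_ge0 w.
set a := vnorm u in hu hu0 *; set b := vnorm w in hw hw0 *.
set p := dot u w.
have H := cs_c u w; rewrite -/p -hu -hw in H.
destruct (Req_dec a 0) as [ha|ha].
- rewrite ha Rmult_0_l. apply: Rnot_lt_le => hp.
  have := H ((b ^ 2 + 1) / p) ltac:(apply: Rdiv_lt_0_compat; nra).
  rewrite ha => h.
  have e : 2 * ((b ^ 2 + 1) / p) * p = 2 * (b ^ 2 + 1) by field; lra.
  rewrite e in h; nra.
- destruct (Req_dec b 0) as [hb|hb].
  + rewrite hb Rmult_0_r. apply: Rnot_lt_le => hp.
    have := H (p / a ^ 2) ltac:(apply: Rdiv_lt_0_compat; nra).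
    rewrite hb. move=> h.
    have e1 : 2 * (p / a ^ 2) * p = 2 * (p * p / a ^ 2) by field.
    have e2 : (p / a ^ 2) ^ 2 * a ^ 2 + 0 ^ 2 = p * p / a ^ 2 by field.
    rewrite e1 e2 in h.
    have : 0 < p * p / a ^ 2 by apply: Rdiv_lt_0_compat; nra.
    lra.
  + have ha' : 0 < a by lra. have hb' : 0 < b by lra.
    have h := H (b / a) ltac:(apply: Rdiv_lt_0_compat; lra).
    have e1 : (b / a) ^ 2 * a ^ 2 = b ^ 2 by field.
    rewrite e1 in h.
    have : 2 * (b / a) * p * a <= 2 * b ^ 2 * a by nra.
    have -> : 2 * (b / a) * p * a = 2 * b * p by field.
    nra.
Qed.
End V.

Lemma subgrad d (g : vec d -> R) grad y z : convex_fun g -> has_gradient g grad ->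
  g y + dot (grad y) (vsub z y) <= g z.
Proof.
move=> hc hg. apply: Rnot_lt_le => hlt.
set h := vsub z y in hlt. set D := dot (grad y) h in hlt.
set gap := g y + D - g z.
have hgap : 0 < gap by rewrite /gap; lra.
have hn := vnorm_ge0 h.
set eps := gap / (2 * (vnorm h + 1)).
have heps : 0 < eps by apply: Rdiv_lt_0_compat; lra.
have [del [hdel Hd]] := hg y eps heps.
set t := Rmin 1 (del / (2 * (vnorm h + 1))).
have ht0 : 0 < t.
  apply: Rmin_pos; [lra| apply: Rdiv_lt_0_compat; lra].
have ht1 : t <= 1 by apply: Rmin_l.
have ht2 : t <= del / (2 * (vnorm h + 1)) by apply: Rmin_r.
have htn : t * vnorm h < del.
  have : t * (2 * (vnorm h + 1)) <= del.
    have := Rmult_le_compat_r (2 * (vnorm h + 1)) _ _ ltac:(lra) ht2.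
    have -> : del / (2 * (vnorm h + 1)) * (2 * (vnorm h + 1)) = del by field; lra.
    done.
  nra.
have H1 := Hd (vscale t h) ltac:(rewrite vnorm_scale; lra).
rewrite vnorm_scale in H1; last lra.
rewrite dot_scaler -/D in H1.
have e : vadd y (vscale t h) = vadd (vscale t z) (vscale (1 - t) y).
  apply: functional_extensionality => i; rewrite /vadd /vscale /h /vsub; ring.
have H2 := hc z y t ltac:(lra).
rewrite -e in H2.
have H3 : - (g (vadd y (vscale t h)) - g y - t * D) <= Rabs (g (vadd y (vscale t h)) - g y - t * D) by rewrite -Rabs_Ropp; apply: Rle_abs.
have : t * D - eps * (t * vnorm h) <= t * (g z - g y) by lra.
have : eps * vnorm h < gap.
  rewrite /eps.
  have -> : gap / (2 * (vnorm h + 1)) * vnorm h = gap * (vnorm h / (2 * (vnorm h + 1))) by field; lra.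
  have : vnorm h / (2 * (vnorm h + 1)) < 1.
    apply: (Rmult_lt_reg_r (2 * (vnorm h + 1))); first lra.
    field_simplify; lra.
  nra.
rewrite /gap => h4 h5.
have : t * (D - eps * vnorm h - (g z - g y)) <= 0 by lra.
nra.
Qed.

Lemma next_a_facts lam A : 0 < lam -> 0 <= A ->
  0 < next_a lam A /\ next_a lam A ^ 2 = lam * (A + next_a lam A).
Proof.
move=> hl hA; rewrite /next_a.
have hq : 0 <= lam ^ 2 + 4 * lam * A by nra.
have hs := sqrt_pos (lam ^ 2 + 4 * lam * A).
have hss := sqrt_sqrt _ hq.
split; first lra.
set s := sqrt _ in hs hss *. nra.
Qed.

Lemma step d (g : vec d -> R) grad sigma delta lam (x y : nat -> vec d) xs k :
  convex_fun g -> has_gradient g grad -> 0 < sigma < 1 -> 0 <= delta ->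
  0 < lam k.+1 -> 0 <= Aseq lam k ->
  vnorm (vsub (vadd (vscale (lam (S k)) (grad (y (S k)))) (y (S k)))
                (xtilde lam x y k))
      <= sigma * vnorm (vsub (y (S k)) (xtilde lam x y k)) + lam (S k) * delta ->
  vnorm (vsub (x (S k)) (vsub (x k) (vscale (aseq lam (S k)) (grad (y (S k))))))
      <= aseq lam (S k) * delta ->
  Aseq lam k.+1 * (g (y k.+1) - g xs) + / 2 * vnorm (vsub (x k.+1) xs) ^ 2
  + (1 - sigma) * Aseq lam k.+1 / (2 * lam k.+1) * vnorm (vsub (y k.+1) (xtilde lam x y k)) ^ 2
  <= Aseq lam k * (g (y k) - g xs) + / 2 * vnorm (vsub (x k) xs) ^ 2
     + delta * (aseq lam k.+1 * vnorm (vsub (x k.+1) xs))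
     + delta ^ 2 / (2 * (1 - sigma)) * aseq lam k.+1 ^ 2.
Proof.
move=> hc hg hs hd hl hA hr he.
have [ha ha2] := next_a_facts _ _ hl hA.
have hA' : Aseq lam k.+1 = Aseq lam k + aseq lam k.+1 by [].
rewrite -/(aseq lam k.+1) -hA' in ha ha2.
set A := Aseq lam k in hA hA' ha2 *.
set a := aseq lam k.+1 in ha ha2 hA' he *.
set A' := Aseq lam k.+1 in ha2 hA' *.
set l := lam k.+1 in hl ha2 hr *.
set v := grad (y k.+1) in hr he *.
set xt := xtilde lam x y k in hr *.
set Y' := y k.+1 in hr *. set Y := y k. set X' := x k.+1 in he *. set X := x k in he *.
have sub1 := subgrad _ g grad Y' Y hc hg.
have sub2 := subgrad _ g grad Y' xs hc hg.
rewrite -/v !dot_subr in sub1 sub2.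
have hxt : A' * dot v xt = A * dot v Y + a * dot v X.
  rewrite /xt /xtilde dot_addr !dot_scaler -/A' -/A -/a -/X -/Y. field. lra.
have I1 : A' * (g Y' - g xs) - A * (g Y - g xs)
          <= A' * (dot v Y' - dot v xt) + a * (dot v X - dot v xs).
  have h1 : A * (g Y' + (dot v Y - dot v Y')) <= A * g Y by apply: Rmult_le_compat_l.
  have h2 : a * (g Y' + (dot v xs - dot v Y')) <= a * g xs by apply: Rmult_le_compat_l; lra.
  rewrite hA'. rewrite hA' in hxt. nra.
set e := vsub X' (vsub X (vscale a v)) in he.
have I2id : / 2 * dot (vsub X' xs) (vsub X' xs) - / 2 * dot (vsub X xs) (vsub X xs)
   + a * (dot v X - dot v xs) - dot e (vsub X' xs) - / 2 * a ^ 2 * dot v v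
   + / 2 * dot (vadd (vscale a v) (vsub X' X)) (vadd (vscale a v) (vsub X' X)) = 0.
  rewrite /e !(dot_addl, dot_subl, dot_scalel, dot_addr, dot_subr, dot_scaler).
  rewrite ?(dot_comm xs X') ?(dot_comm xs X) ?(dot_comm X X') ?(dot_comm X' v) ?(dot_comm X v) ?(dot_comm xs v).
  field.
have I2 : / 2 * vnorm (vsub X' xs) ^ 2 - / 2 * vnorm (vsub X xs) ^ 2 + a * (dot v X - dot v xs)
          <= a * delta * vnorm (vsub X' xs) + / 2 * a ^ 2 * dot v v.
  have c1 := cs e (vsub X' xs).
  have c2 := dot_ge0 (vadd (vscale a v) (vsub X' X)).
  have n1 := vnorm_ge0 (vsub X' xs). have n2 := vnorm_ge0 e.
  have c3 : vnorm e * vnorm (vsub X' xs) <= a * delta * vnorm (vsub X' xs)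
    by apply: Rmult_le_compat_r.
  rewrite !vnorm_sq; lra.
set s := vsub Y' xt in hr *.
set r := vsub (vadd (vscale l v) Y') xt in hr.
  clearbody xt.
have Drid : dot r r = l ^ 2 * dot v v + 2 * l * (dot v Y' - dot v xt) + dot s s.
  rewrite /r /s !(dot_addl, dot_subl, dot_scalel, dot_addr, dot_subr, dot_scaler).
  rewrite ?(dot_comm Y' v) ?(dot_comm xt v) ?(dot_comm xt Y'). field.
have hr0 := vnorm_ge0 r. have ht0 := vnorm_ge0 s.
set t := vnorm s in hr ht0 *.
have hDr : dot r r <= (sigma * t + l * delta) ^ 2.
  rewrite -vnorm_sq. apply: pow_incr; lra.
have hq : (1 - sigma) * (sigma * t + l * delta) ^ 2 <= sigma * (1 - sigma) * t ^ 2 + (l * delta) ^ 2.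
  have : 0 <= sigma * ((1 - sigma) * t - l * delta) ^ 2 by apply: Rmult_le_pos; [lra| apply: pow2_ge_0].
  nra.
have hst : dot s s = t ^ 2 by rewrite -vnorm_sq.
set Q := dot v Y' - dot v xt.
have key : A' * Q + / 2 * a ^ 2 * dot v v + (1 - sigma) * A' / (2 * l) * t ^ 2
           <= delta ^ 2 / (2 * (1 - sigma)) * a ^ 2.
  rewrite ha2.
  have e1 : A' * Q + / 2 * (l * A') * dot v v + (1 - sigma) * A' / (2 * l) * t ^ 2
         = A' / (2 * l) * (dot r r - sigma * t ^ 2).
    rewrite Drid hst /Q. field. lra.
  have e2 : delta ^ 2 / (2 * (1 - sigma)) * (l * A')
         = A' / (2 * l) * ((l * delta) ^ 2 / (1 - sigma)).
    field. lra.
  have ha2' : l * (A + a) = l * A' by rewrite hA'.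
  rewrite e1 e2.
  have hA'0 : 0 < A' / (2 * l) by apply: Rdiv_lt_0_compat; lra.
  apply: Rmult_le_compat_l; first lra.
  have : dot r r - sigma * t ^ 2 <= (l * delta) ^ 2 / (1 - sigma).
    apply: (Rmult_le_reg_l (1 - sigma)); first lra.
    have -> : (1 - sigma) * ((l * delta) ^ 2 / (1 - sigma)) = (l * delta) ^ 2 by field; lra.
    nra.
  done.
rewrite -/Q in I1.
lra.
Qed.

Lemma sum1S f k : sum1 f k.+1 = sum1 f k + f k.+1.
Proof. by rewrite /sum1 big_nat_recr. Qed.
Lemma sum10 f : sum1 f 0 = 0.
Proof. by rewrite /sum1 big_geq. Qed.

Theorem mainTheorem11 (d : nat) (g : vec d -> R) (grad : vec d -> vec d)
  (sigma delta : R) (K : nat) (lam : nat -> R) (x y : nat -> vec d) (xs : vec d) :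
  convex_fun g ->
  has_gradient g grad ->
  (forall z : vec d, g xs <= g z) ->
  0 < sigma < 1 ->
  0 <= delta ->
  (1 <= K)%nat ->
  generated_by_framework grad sigma delta K lam x y ->
  forall k : nat, (1 <= k <= K)%nat ->
    Aseq lam k * (g (y k) - g xs) + / 2 * vnorm (vsub (x k) xs) ^ 2
    + sum1 (fun i => (1 - sigma) * Aseq lam i / (2 * lam i)
                     * vnorm (vsub (y i) (xtilde lam x y (i.-1))) ^ 2) k
    <= / 2 * vnorm xs ^ 2
       + (delta * sum1 (fun i => aseq lam i * vnorm (vsub (x i) xs)) k
          + delta ^ 2 / (2 * (1 - sigma)) * sum1 (fun i => aseq lam i ^ 2) k).
Proof.
move=> hc hg hmin hs hd hK [hlam [hx0 [hy0 hstep]]].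
have hA : forall k, (k <= K)%nat -> 0 <= Aseq lam k.
  elim=> [|k IH] hk; first by rewrite /=; lra.
  have hl : 0 < lam k.+1 by apply: hlam; rewrite hk andbT.
  have hk' : (k <= K)%nat by apply: leq_trans hk.
  have := IH hk'. have [h1 _] := next_a_facts (lam k.+1) (Aseq lam k) hl (IH hk').
  rewrite /=; lra.
suff: forall k, (k <= K)%nat ->
    Aseq lam k * (g (y k) - g xs) + / 2 * vnorm (vsub (x k) xs) ^ 2
    + sum1 (fun i => (1 - sigma) * Aseq lam i / (2 * lam i)
                     * vnorm (vsub (y i) (xtilde lam x y (i.-1))) ^ 2) k
    <= / 2 * vnorm xs ^ 2
       + (delta * sum1 (fun i => aseq lam i * vnorm (vsub (x i) xs)) k
          + delta ^ 2 / (2 * (1 - sigma)) * sum1 (fun i => aseq lam i ^ 2) k).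
  by move=> H k /andP [_ hk]; apply: H.
elim=> [|k IH] hk.
  rewrite !sum10 hx0.
  have -> : vnorm (vsub vzero xs) = vnorm xs.
    rewrite /vnorm /dot; f_equal; apply: eq_bigr => i _; rewrite /vsub /vzero; ring.
  rewrite /=; lra.
have hk' : (k <= K)%nat by apply: leq_trans hk.
have hl : 0 < lam k.+1 by apply: hlam; rewrite hk andbT.
have [hr he] := hstep k hk.
have St := step d g grad sigma delta lam x y xs k hc hg hs hd hl (hA k hk') hr he.
have IH' := IH hk'.
rewrite !sum1S; cbv beta. change (k.+1.-1) with k.
lra.
Qed.
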